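(* Let $\theta:(0,\infty)\to\mathbb{R}$ satisfy $0<\theta(x)\le 2\arctan(x/2)$ for all $x>0$. Let $\Lambda\ge0$, $m>0$, $\Delta t>0$ with $\Delta t^2\Lambda/m<4$, let $n\ge1$ be an integer, $m_n=m/n$, $\beta>0$, and $\omega>0$. Put $\vartheta=\theta(\omega\Delta t)$ and $$A=\cos\vartheta-\frac{\Delta t^2(\Lambda/m)}{2}\frac{\sin\vartheta}{\omega\Delta t}.$$ Define the $2\times2$ real matrices $$S^{1/2}=\begin{bmatrix}\cos(\vartheta/2)&\sin(\vartheta/2)/\omega\\-\omega\sin(\vartheta/2)&\cos(\vartheta/2)\end{bmatrix},\qquad B^{1/2}=\begin{bmatrix}1&0\\-\Delta t(\Lambda/m)/2&1\end{bmatrix},$$ $$M=B^{1/2}S^{1/2}\begin{bmatrix}1&0\\0&0\end{bmatrix}S^{1/2}B^{1/2},\qquad R=\frac{1}{\beta m_n}B^{1/2}S^{1/2}\begin{bmatrix}0&0\\0&1\end{bmatrix}(B^{1/2}S^{1/2})^{\mathrm T},$$ and consider the Markov chain on $\mathbb{R}^2$ $$\begin{bmatrix}\varrho^{(k)}\\\varphi^{(k)}\end{bmatrix}=M\begin{bmatrix}\varrho^{(k-1)}\\\varphi^{(k-1)}\end{bmatrix}+R^{1/2}\begin{bmatrix}\xi^{(k-1)}\\\eta^{(k-1)}\end{bmatrix},\quad k\ge1,$$ where all $\xi^{(k)},\eta^{(k)}$ are independent standard normal random variables independent of the initial condition. For a probability distribution $\mu$ on $\mathbb{R}$, let $\mu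 p^k$ denote the law of $\varrho^{(k)}$ when $\varrho^{(0)}\sim\mu$ and, independently, $\varphi^{(0)}\sim\mathcal N(0,(\beta m_n)^{-1})$. Then for all integers $k>1$ and all probability distributions $\mu,\nu$ on $\mathbb{R}$, $$\mathcal W_2(\mu p^k,\nu p^k)\le\begin{cases}A^{k-1}\,\mathcal W_2(\mu,\nu)&\text{if }A>0,\\[2pt] \dfrac12\,\dfrac1{k-1}\,\mathcal W_2(\mu,\nu)&\text{otherwise.}\end{cases}$$
   Context: For probability distributions $\mu,\nu$ on $\mathbb{R}$, the $2$-Wasserstein distance is $\mathcal W_2(\mu,\nu)=\big(\inf\mathbb E|X-Y|^2\big)^{1/2}$, the infimum over all couplings $(X,Y)$ with $X\sim\mu$, $Y\sim\nu$ (possibly $+\infty$). $R^{1/2}$ denotes a matrix square root of the positive semidefinite matrix $R$. This chain is the infinite-friction limit of a BAOAB-type thermostatted ring-polymer integrator for one normal mode of frequency $\omega$ in the harmonic potential $V(q)=(\Lambda/2)q^2$. *)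

(* Defs.v *)
From HB Require Import structures.
From mathcomp Require Import all_boot all_order all_algebra.
From mathcomp Require Import all_classical all_reals all_analysis.
Set Implicit Arguments. Unset Strict Implicit. Unset Printing Implicit Defensive.
Import Order.TTheory GRing.Theory Num.Theory.
Local Open Scope classical_set_scope.
Local Open Scope ring_scope.

Section Defs.
Variable R : realType.

Definition mx2 (a b c d : R) : 'M[R]_2 :=
  \matrix_(i < 2, j < 2)
    (if i == 0 :> nat then (if j == 0 :> nat then a else b)
     else (if j == 0 :> nat then c else d)).

Definition cv2 (x y : R) : 'cV[R]_2 :=
  \col_(i < 2) (if i == 0 :> nat then x else y).

Definition Shalf (th w : R) : 'M[R]_2 :=
  mx2 (cos (th / 2)) (sin (th / 2) / w) (- w * sin (th / 2)) (cos (th / 2)).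

Definition Bhalf (dt lm : R) : 'M[R]_2 := mx2 1 0 (- (dt * lm) / 2) 1.

Definition Mmat (th w dt lm : R) : 'M[R]_2 :=
  Bhalf dt lm *m Shalf th w *m mx2 1 0 0 0 *m Shalf th w *m Bhalf dt lm.

Definition Rmat (th w dt lm beta mn : R) : 'M[R]_2 :=
  (beta * mn)^-1 *: (Bhalf dt lm *m Shalf th w *m mx2 0 0 0 1
                     *m (Bhalf dt lm *m Shalf th w)^T).

Definition psd_sqrt (Q S : 'M[R]_2) : Prop :=
  Q^T = Q /\ (forall v : 'cV[R]_2, 0 <= (v^T *m Q *m v) 0 0) /\ Q *m Q = S.

Fixpoint chain (Mm Q : 'M[R]_2) (Omega : Type) (rho0 phi0 : Omega -> R)
    (xi eta : nat -> Omega -> R) (k : nat) (o : Omega) : 'cV[R]_2 :=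
  match k with
  | 0 => cv2 (rho0 o) (phi0 o)
  | k'.+1 => Mm *m chain Mm Q rho0 phi0 xi eta k' o + Q *m cv2 (xi k' o) (eta k' o)
  end.

(** Mutual independence of a family of real random variables: the product
    rule holds for every finite subfamily (given as a duplicate-free list). *)
Definition mutually_independent (d : measure_display) (Omega : measurableType d)
    (P : probability Omega R) (I : eqType) (X : I -> Omega -> R) : Prop :=
  forall (J : seq I) (A : I -> set R), uniq J ->
    (forall i, measurable (A i)) ->
    P (\bigcap_(i in [set i | i \in J]) (X i @^-1` A i)) =
    (\prod_(i <- J) P (X i @^-1` A i))%E.

(** Index of the random inputs: inl true = rho^(0), inl false = phi^(0),
    inr (true, j) = xi^(j), inr (false, j) = eta^(j). *)
Definition inputs (Omega : Type) (rho0 phi0 : Omega -> R) (xi eta : nat -> Omega -> R)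
    (i : (bool + (bool * nat))%type) : Omega -> R :=
  match i with
  | inl true => rho0 | inl false => phi0
  | inr (true, j) => xi j | inr (false, j) => eta j
  end.

Definition has_law (d : measure_display) (Omega : measurableType d)
    (P : probability Omega R) (X : Omega -> R) (mu : set R -> \bar R) : Prop :=
  measurable_fun setT X /\ forall A : set R, measurable A -> P (X @^-1` A) = mu A.

Definition chain_setup (d : measure_display) (Omega : measurableType d)
    (P : probability Omega R) (mu : set R -> \bar R) (s0 : R)
    (rho0 phi0 : Omega -> R) (xi eta : nat -> Omega -> R) : Prop :=
  [/\ has_law P rho0 mu, has_law P phi0 (normal_prob 0 s0),
      (forall j, has_law P (xi j) (normal_prob 0 1)),
      (forall j, has_law P (eta j) (normal_prob 0 1)) &
      mutually_independent P (inputs rho0 phi0 xi eta)].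

Definition law_rho (Mm Q : 'M[R]_2) (d : measure_display) (Omega : measurableType d)
    (P : probability Omega R) (rho0 phi0 : Omega -> R) (xi eta : nat -> Omega -> R)
    (k : nat) : set R -> \bar R :=
  pushforward P (fun o => chain Mm Q rho0 phi0 xi eta k o 0 0).

Definition coupling (mu nu : set R -> \bar R) (pi : probability (R * R)%type R) : Prop :=
  forall A : set R, measurable A ->
    pi (fst @^-1` A) = mu A /\ pi (snd @^-1` A) = nu A.

Definition W2sq (mu nu : set R -> \bar R) : \bar R :=
  ereal_inf [set (\int[pi]_z ((z.1 - z.2) ^+ 2)%:E)%E
            | pi in [set pi : probability (R * R)%type R | coupling mu nu pi]].

Definition W2 (mu nu : set R -> \bar R) : \bar R :=
  match W2sq mu nu with
  | EFin r => (Num.sqrt r)%:E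
  | x => x
  end.

End Defs.

(* Main.v *)
Require Import Defs.
From HB Require Import structures.
From mathcomp Require Import all_boot all_order all_algebra.
From mathcomp Require Import all_classical all_reals all_analysis.
From mathcomp Require Import measurable_realfun ring lra.
Import Order.TTheory GRing.Theory Num.Theory.
Local Open Scope classical_set_scope.
Local Open Scope ring_scope.
Set Implicit Arguments. Unset Strict Implicit.

Lemma bigcap_cons (T : Type) (I : eqType) (F : I -> set T) (j : I) (J : seq I) :
  \bigcap_(i in [set i | i \in j :: J]) F i =
  F j `&` \bigcap_(i in [set i | i \in J]) F i.
Proof.
apply/seteqP; split => x.
  move=> H; split; first by apply: H; rewrite /= inE eqxx.
  by move=> i /= iJ; apply: H; rewrite /= inE iJ orbT.
move=> [Fj H] i /=; rewrite inE => /orP [/eqP ->//|iJ]; exact: H.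
Qed.

Section Indep.
Context (R : realType) d (Omega : measurableType d) (P : probability Omega R)
  (I : eqType) (X : I -> Omega -> R).
Hypothesis mX : forall i, measurable_fun setT (X i).
Hypothesis indep : mutually_independent P X.

Definition Gsys (J : seq I) : set (set Omega) :=
  [set E | exists A : I -> set R, (forall i, measurable (A i)) /\
     E = \bigcap_(i in [set i | i \in J]) (X i @^-1` A i)].

Definition Hsys J := [set E | Gsys J E /\ E `<=` setT].

Lemma bigcap_meas (J : seq I) (A : I -> set R) : (forall i, measurable (A i)) ->
  measurable (\bigcap_(i in [set i | i \in J]) (X i @^-1` A i)).
Proof.
move=> mA; elim: J => [|j J IH].
  rewrite (_ : [set i | i \in [::]] = set0); first by rewrite bigcap_set0.
  by apply/seteqP; split => x.
rewrite bigcap_cons; apply: measurableI => //.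
by rewrite -[X in measurable X]setTI; apply: mX.
Qed.

Lemma Hsys_meas J : Hsys J `<=` measurable.
Proof. by move=> E [[A [mA ->]] _]; exact: bigcap_meas. Qed.

Lemma Hsys_setI J : setI_closed (Hsys J).
Proof.
move=> E1 E2 [[A1 [mA1 ->]] _] [[A2 [mA2 ->]] _]; split => //.
exists (fun i => A1 i `&` A2 i); split; first by move=> i; exact: measurableI.
apply/seteqP; split => x /=.
  by move=> [H1 H2] i iJ; split; [exact: H1|exact: H2].
by move=> H; split => i iJ; have [] := H i iJ.
Qed.

Lemma indep_sigma (i0 : I) (J : seq I) (A0 : set R) : measurable A0 ->
  uniq J -> i0 \notin J -> forall E, <<s setT, Hsys J>> E ->
  P (E `&` X i0 @^-1` A0) = (P (X i0 @^-1` A0) * P E)%E.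
Proof.
move=> mA0 uJ i0J.
have mF : measurable (X i0 @^-1` A0).
  by rewrite -[X in measurable X]setTI; apply: mX.
pose r : {nonneg R} := @NngNum _ (fine (P (X i0 @^-1` A0)))
   (fine_ge0 (measure_ge0 P _)).
have rE : (r%:num)%:E = P (X i0 @^-1` A0).
  by rewrite /= fineK// fin_num_measure.
move=> E sE.
have h1 : mrestr P mF setT = mscale r P setT.
  rewrite /mrestr /mscale rE setTI.
  by rewrite -[LHS]mule1; congr (_ * _)%E; apply/esym; exact: probability_setT.
have h2 : forall B, Hsys J B -> mrestr P mF B = mscale r P B.
  move=> B [[A [mA ->]] _]; rewrite /mrestr /mscale rE.
  pose A' i := if i == i0 then A0 else A i.
  have mA' : forall i, measurable (A' i) by move=> i; rewrite /A'; case: ifP.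
  have := @indep (i0 :: J) A'.
  rewrite /= i0J uJ => /(_ isT mA').
  rewrite bigcap_cons big_cons /A' eqxx.
  have eqJ : forall F : I -> set Omega, (forall i, i \in J -> F i = X i @^-1` A i) ->
     \bigcap_(i in [set i | i \in J]) F i = \bigcap_(i in [set i | i \in J]) (X i @^-1` A i).
    move=> F HF; apply/seteqP; split => x /= H i iJ.
      by rewrite -HF//; exact: H.
    by rewrite HF//; exact: H.
  rewrite eqJ; last first.
    by move=> i iJ; case: eqP => // ei; move: iJ i0J; rewrite ei => ->.
  rewrite setIC => ->; congr (_ * _)%E.
  rewrite (@indep J A uJ mA) big_seq [RHS]big_seq; apply: eq_bigr => i iJ.
  by case: eqP => // ei; move: iJ i0J; rewrite ei => ->.
have h3 : (mrestr P mF setT < +oo)%E.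
  by rewrite /mrestr setTI (le_lt_trans (probability_le1 _ _)) ?ltry.
have h4 : forall Y, <<s setT, Hsys J>> Y -> Y `<=` setT by move=> Y _; exact: subsetT.
have := @g_sigma_algebra_measure_unique_trace d R Omega (Gsys J) setT
  measurableT (@Hsys_meas J) (@Hsys_setI J) (mrestr P mF) (mscale r P) h1 h2 h3 h4 E sE.
move=> H; rewrite -rE; exact: H.
Qed.

Lemma X_meas_sub J j : j \in J ->
  measurable_fun (T := g_sigma_algebraType (Hsys J)) setT (X j).
Proof.
move=> jJ _ B mB; apply: sub_sigma_algebra; split => //.
exists (fun i => if i == j then B else setT); split.
  by move=> i; case: ifP.
rewrite setTI; apply/seteqP; split => x /=.
  by move=> Hx i iJ /=; case: eqP => [->|].

by move=> H; have := H j jJ; rewrite eqxx.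
Qed.

End Indep.

Lemma sum_meas (R : realType) d (T : measurableType d) (I : eqType)
  (Y : I -> T -> R) (c : I -> R) (J0 : seq I) :
  (forall j, j \in J0 -> measurable_fun setT (Y j)) ->
  measurable_fun setT (fun o => \sum_(j <- J0) c j * Y j o).
Proof.
elim: J0 => [|j J0 IH] HY.
  under eq_fun do rewrite big_nil; exact: measurable_cst.
under eq_fun do rewrite big_cons.
apply: measurable_realfun.measurable_funD; last first.
  by apply: IH => i iJ; apply: HY; rewrite inE iJ orbT.
apply: measurable_realfun.measurable_funM; first exact: measurable_cst.
by apply: HY; rewrite inE eqxx.
Qed.

Definition lsum (R : realType) (T : Type) (I : eqType) (c : I -> R)
  (Y : I -> T -> R) (J : seq I) (o : T) : R := \sum_(j <- J) c j * Y j o.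
Arguments lsum {R T I}.

Section Indep2.
Context (R : realType) d (Omega : measurableType d) (P : probability Omega R)
  (I : eqType) (X : I -> Omega -> R).
Hypothesis mX : forall i, measurable_fun setT (X i).
Hypothesis indep : mutually_independent P X.

Lemma indep_sum (i0 : I) (J : seq I) (c : I -> R) (A0 B : set R) :
  measurable A0 -> measurable B -> uniq J -> i0 \notin J ->
  P (X i0 @^-1` A0 `&` lsum c X J @^-1` B) =
  (P (X i0 @^-1` A0) * P (lsum c X J @^-1` B))%E.
Proof.
move=> mA0 mB uJ i0J; rewrite setIC.
have := @sum_meas R _ (g_sigma_algebraType (Hsys X J)) I X c J
  (fun j jJ => @X_meas_sub _ _ _ _ X J j jJ) measurableT B mB.
rewrite setTI => H.
exact: (@indep_sigma R d Omega P I X mX indep i0 J A0 mA0 uJ i0J _ H).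
Qed.

End Indep2.


Section Law.
Context (R : realType).

Definition mkmf d d' (T : measurableType d) (T' : measurableType d') (f : T -> T')
  (mf : measurable_fun setT f) : {mfun T >-> T'} :=
  HB.pack f (isMeasurableFun.Build _ _ _ _ f mf).

Lemma mkmfE d d' (T : measurableType d) (T' : measurableType d') (f : T -> T')
  (mf : measurable_fun setT f) x : mkmf mf x = f x.
Proof. by []. Qed.

Lemma prod_eqm d1 d2 (T1 : measurableType d1) (T2 : measurableType d2)
  (m1 m1' : probability T1 R) (m2 m2' : probability T2 R) :
  (forall A, measurable A -> m1 A = m1' A) ->
  (forall B, measurable B -> m2 B = m2' B) ->
  forall E, measurable E -> (m1 \x m2)%E E = (m1' \x m2')%E E.
Proof.
move=> h1 h2 E mE.
apply: (product_measure_unique (m' := (m1' \x m2')%E)) => // A B mA mB.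
transitivity (m1' A * m2' B)%E; first exact: product_measure1E.
by congr (_ * _)%E; symmetry; [exact: h1|exact: h2].
Qed.

Lemma joint_law d (Omega : measurableType d) (P : probability Omega R)
  (X Y : Omega -> R) (mX : measurable_fun setT X) (mY : measurable_fun setT Y) :
  (forall A B, measurable A -> measurable B ->
     P (X @^-1` A `&` Y @^-1` B) = (P (X @^-1` A) * P (Y @^-1` B))%E) ->
  forall E, measurable E ->
  P ((fun o => (X o, Y o)) @^-1` E) =
  (distribution P (mkmf mX) \x distribution P (mkmf mY))%E E.
Proof.
move=> hind E mE.
have mXY := measurable_fun_pair mX mY.
symmetry.
have := @product_measure_unique _ _ R R R (distribution P (mkmf mX))
  (distribution P (mkmf mY)) (distribution P (mkmf mXY)).
apply; last exact: mE.
move=> A B mA mB.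
rewrite /distribution /pushforward /=.
exact: hind.
Qed.

End Law.

Lemma lsum_cons (R : realType) (T : Type) (I : eqType) (c : I -> R)
  (Y : I -> T -> R) j J o : lsum c Y (j :: J) o = c j * Y j o + lsum c Y J o.
Proof. by rewrite /lsum big_cons. Qed.

Lemma lsum_meas (R : realType) d (T : measurableType d) (I : eqType) (c : I -> R)
  (Y : I -> T -> R) J : (forall i, measurable_fun setT (Y i)) ->
  measurable_fun setT (lsum c Y J).
Proof. by move=> mY; apply: sum_meas => j _; exact: mY. Qed.

Lemma meas_lin (R : realType) (a : R) :
  measurable_fun setT (fun z : R * R => a * z.1 + z.2).
Proof.
apply: measurable_realfun.measurable_funD; last exact: measurable_snd.
apply: measurable_realfun.measurable_funM; first exact: measurable_cst.
exact: measurable_fst.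
Qed.

Section LawSum.
Context (R : realType) (I : eqType).
Context d1 (Omega1 : measurableType d1) (P1 : probability Omega1 R) (X1 : I -> Omega1 -> R).
Context d2 (Omega2 : measurableType d2) (P2 : probability Omega2 R) (X2 : I -> Omega2 -> R).
Hypothesis mX1 : forall i, measurable_fun setT (X1 i).
Hypothesis mX2 : forall i, measurable_fun setT (X2 i).
Hypothesis indep1 : mutually_independent P1 X1.
Hypothesis indep2 : mutually_independent P2 X2.

Lemma law_sum_eq (c : I -> R) (J : seq I) : uniq J ->
  (forall j, j \in J -> forall A, measurable A -> P1 (X1 j @^-1` A) = P2 (X2 j @^-1` A)) ->
  forall B, measurable B -> P1 (lsum c X1 J @^-1` B) = P2 (lsum c X2 J @^-1` B).
Proof.
elim: J => [|j J IH] uJ hlaw B mB.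
  have [B0|B0] := pselect (B 0).
    rewrite (_ : lsum c X1 [::] @^-1` B = setT); last first.
      by apply/seteqP; split => x //= _; rewrite /lsum big_nil.
    rewrite (_ : lsum c X2 [::] @^-1` B = setT); last first.
      by apply/seteqP; split => x //= _; rewrite /lsum big_nil.
    by rewrite !probability_setT.
  rewrite (_ : lsum c X1 [::] @^-1` B = set0); last first.
    by apply/seteqP; split => x //=; rewrite /lsum big_nil.
  rewrite (_ : lsum c X2 [::] @^-1` B = set0); last first.
    by apply/seteqP; split => x //=; rewrite /lsum big_nil.
  by rewrite !measure0.
move: uJ => /= /andP [jJ uJ].
have mg := meas_lin (c j).
have mE : measurable ((fun z : R * R => c j * z.1 + z.2) @^-1` B).
  by rewrite -[X in measurable X]setTI; apply: mg.
have e1 : lsum c X1 (j :: J) @^-1` B =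
    (fun o => (X1 j o, lsum c X1 J o)) @^-1` ((fun z : R * R => c j * z.1 + z.2) @^-1` B).
  by apply/seteqP; split => x /=; rewrite lsum_cons.
have e2 : lsum c X2 (j :: J) @^-1` B =
    (fun o => (X2 j o, lsum c X2 J o)) @^-1` ((fun z : R * R => c j * z.1 + z.2) @^-1` B).
  by apply/seteqP; split => x /=; rewrite lsum_cons.
rewrite e1 e2.
rewrite (joint_law (mX1 j) (lsum_meas c J mX1)); last 2 first.
- by move=> A B' mA mB'; exact: indep_sum.
- exact: mE.
rewrite (joint_law (mX2 j) (lsum_meas c J mX2)); last 2 first.
- by move=> A B' mA mB'; exact: indep_sum.
- exact: mE.
apply: prod_eqm => //.
- by move=> A mA; rewrite /distribution /pushforward /=; apply: hlaw => //; rewrite inE eqxx.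
- move=> A mA; rewrite /distribution /pushforward /=; apply: IH => // i iJ.
  by apply: hlaw; rewrite inE iJ orbT.
Qed.

End LawSum.

Section Coupling.
Context (R : realType) (a : R) (L mu nu : probability R R)
  (pi : probability (R * R)%type R).
Hypothesis hpi : coupling mu nu pi.

Let Pi := (pi \x L)%E.

Lemma meas_q1 : measurable_fun setT (fun p : (R * R) * R => (p.1.1, p.2)).
Proof.
apply: measurable_fun_pair; last exact: measurable_snd.
exact: (measurableT_comp measurable_fst measurable_fst).
Qed.

Lemma meas_q2 : measurable_fun setT (fun p : (R * R) * R => (p.1.2, p.2)).
Proof.
apply: measurable_fun_pair; last exact: measurable_snd.
exact: (measurableT_comp measurable_snd measurable_fst).
Qed.

Lemma Pi_q1 E : measurable E ->
  Pi ((fun p : (R * R) * R => (p.1.1, p.2)) @^-1` E) = (mu \x L)%E E.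
Proof.
move=> mE; symmetry.
have := @product_measure_unique _ _ R R R mu L (distribution Pi (mkmf meas_q1)).
apply; last exact: mE.
move=> A B mA mB; rewrite /distribution /pushforward /=.
have mA' : measurable (@fst R R @^-1` A).
  by rewrite -[X in measurable X]setTI; apply: measurable_fst.
transitivity (pi (@fst R R @^-1` A) * L B)%E; first exact: product_measure1E.
by congr (_ * _)%E; have [] := hpi mA.
Qed.

Lemma Pi_q2 E : measurable E ->
  Pi ((fun p : (R * R) * R => (p.1.2, p.2)) @^-1` E) = (nu \x L)%E E.
Proof.
move=> mE; symmetry.
have := @product_measure_unique _ _ R R R nu L (distribution Pi (mkmf meas_q2)).
apply; last exact: mE.
move=> A B mA mB; rewrite /distribution /pushforward /=.
have mA' : measurable (@snd R R @^-1` A).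
  by rewrite -[X in measurable X]setTI; apply: measurable_snd.
transitivity (pi (@snd R R @^-1` A) * L B)%E; first exact: product_measure1E.
by congr (_ * _)%E; have [] := hpi mA.
Qed.

Definition hcpl (p : (R * R) * R) : R * R := (a * p.1.1 + p.2, a * p.1.2 + p.2).

Lemma meas_h : measurable_fun setT hcpl.
Proof.
apply: measurable_fun_pair.
  by apply: (measurableT_comp (meas_lin a) meas_q1).
by apply: (measurableT_comp (meas_lin a) meas_q2).
Qed.

Definition pi' := distribution Pi (mkmf meas_h).

Lemma pi'_marg1 A : measurable A ->
  pi' (fst @^-1` A) = (mu \x L)%E ((fun z : R * R => a * z.1 + z.2) @^-1` A).
Proof.
move=> mA; rewrite /pi' /distribution /pushforward /= -Pi_q1 //.
by rewrite -[X in measurable X]setTI; apply: meas_lin.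
Qed.

Lemma pi'_marg2 A : measurable A ->
  pi' (snd @^-1` A) = (nu \x L)%E ((fun z : R * R => a * z.1 + z.2) @^-1` A).
Proof.
move=> mA; rewrite /pi' /distribution /pushforward /= -Pi_q2 //.
by rewrite -[X in measurable X]setTI; apply: meas_lin.
Qed.

Lemma meas_sq : measurable_fun setT (fun z : R * R => ((z.1 - z.2) ^+ 2)%:E).
Proof.
apply/measurable_EFinP.
apply: (measurableT_comp (measurable_realfun.exprn_measurable 2)).
apply: measurable_realfun.measurable_funB; [exact: measurable_fst|exact: measurable_snd].
Qed.

Lemma pi'_cost :
  (\int[pi']_z ((z.1 - z.2) ^+ 2)%:E = (a ^+ 2)%:E * \int[pi]_z ((z.1 - z.2) ^+ 2)%:E)%E.
Proof.
rewrite /pi' /distribution.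
rewrite ge0_integral_pushforward //; last first.
  by move=> z _; rewrite lee_fin sqr_ge0.
  exact: meas_sq.
rewrite preimage_setT.
transitivity (\int[Pi]_(x in setT) ((fun z : R * R => ((a ^+ 2) * (z.1 - z.2) ^+ 2)%:E) \o fst) x)%E.
  apply: eq_integral => p _ /=; congr (_%:E); rewrite /hcpl /=; ring.
rewrite -[X in (\int[_]_(x in X) _)%E](preimage_setT (@fst (R*R)%type R)).
rewrite -(ge0_integral_pushforward (phi := fst)) //; last 2 first.
- apply/measurable_EFinP; apply: measurable_realfun.measurable_funM; first exact: measurable_cst.
  apply: (measurableT_comp (measurable_realfun.exprn_measurable 2)).
  apply: measurable_realfun.measurable_funB; [exact: measurable_fst|exact: measurable_snd].
- by move=> z _; rewrite lee_fin mulr_ge0 // ?sqr_ge0.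
rewrite (eq_measure_integral pi); last first.
  move=> A mA _.
  transitivity ((pi \x L)%E (@fst (R*R)%type R @^-1` A)); first by [].
  rewrite (_ : @fst (R*R)%type R @^-1` A = A `*` setT); last first.
    by apply/seteqP; split=> z /= => [?|[]].
  transitivity (pi A * L setT)%E; first exact: product_measure1E.
  by rewrite probability_setT mule1.
under eq_integral do rewrite EFinM.
rewrite ge0_integralZl //.
all: first [exact: meas_sq| by move=> z _; rewrite lee_fin sqr_ge0| by rewrite lee_fin sqr_ge0].
Qed.

End Coupling.

Section Alg.
Context (R : realType).

Lemma mx2_mul (a b c d a' b' c' d' : R) :
  mx2 a b c d *m mx2 a' b' c' d' =
  mx2 (a * a' + b * c') (a * b' + b * d') (c * a' + d * c') (c * b' + d * d').
Proof.
apply/matrixP => i j; rewrite !mxE !big_ord_recl big_ord0 !mxE /=.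
by case: i => [[|[|i]] Hi] //; case: j => [[|[|j]] Hj] //=; rewrite addr0.
Qed.

Lemma mx2_scale (k a b c d : R) : k *: mx2 a b c d = mx2 (k * a) (k * b) (k * c) (k * d).
Proof.
apply/matrixP => i j; rewrite !mxE.
by case: i => [[|[|i]] Hi] //; case: j => [[|[|j]] Hj].
Qed.

Lemma mx2_cv2 (a b c d x y : R) : (mx2 a b c d *m cv2 x y) 0 0 = a * x + b * y.
Proof. by rewrite !mxE !big_ord_recl big_ord0 !mxE /= addr0. Qed.

Lemma cv2_dec (x y : R) : cv2 x y = x *: cv2 1 0 + y *: cv2 0 1.
Proof.
apply/matrixP => i j; rewrite !mxE.
by case: i => [[|[|i]] Hi] //=; rewrite ?mulr1 ?mulr0 ?addr0 ?add0r.
Qed.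

Definition uv1 (th w dt lm : R) := cos (th / 2).
Definition uv2 (th w dt lm : R) := - (dt * lm / 2) * cos (th / 2) - w * sin (th / 2).
Definition vv1 (th w dt lm : R) := cos (th / 2) - dt * lm / 2 * sin (th / 2) / w.
Definition vv2 (th w dt lm : R) := sin (th / 2) / w.
Definition vu th w dt lm := vv1 th w dt lm * uv1 th w dt lm + vv2 th w dt lm * uv2 th w dt lm.

Lemma Mmat_eq th w dt lm : Mmat th w dt lm =
  mx2 (uv1 th w dt lm * vv1 th w dt lm) (uv1 th w dt lm * vv2 th w dt lm)
      (uv2 th w dt lm * vv1 th w dt lm) (uv2 th w dt lm * vv2 th w dt lm).
Proof.
rewrite /Mmat /Bhalf /Shalf !mx2_mul /uv1 /uv2 /vv1 /vv2.
by congr mx2; ring.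
Qed.

Lemma MM th w dt lm : Mmat th w dt lm * Mmat th w dt lm = vu th w dt lm *: Mmat th w dt lm.
Proof.
rewrite -mulmxE Mmat_eq mx2_mul mx2_scale /vu.
by congr mx2; ring.
Qed.

Lemma Mpow th w dt lm k : Mmat th w dt lm ^+ k.+1 = vu th w dt lm ^+ k *: Mmat th w dt lm.
Proof.
elim: k => [|k IH]; first by rewrite expr1 expr0 scale1r.
by rewrite exprS IH -scalerAr MM scalerA -exprSr.
Qed.

Lemma a_coef th w dt lm k : ((Mmat th w dt lm ^+ k.+1) *m cv2 1 0) 0 0 =
  vu th w dt lm ^+ k * (uv1 th w dt lm * vv1 th w dt lm).
Proof.
by rewrite Mpow -scalemxAl mxE Mmat_eq mx2_cv2 mulr1 mulr0 addr0.
Qed.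

End Alg.

Notation Ity := (bool + (bool * nat))%type.

Fixpoint Jk (k : nat) : seq Ity :=
  match k with
  | 0 => [:: inl false]
  | k'.+1 => inr (true, k') :: inr (false, k') :: Jk k'
  end.

Lemma inrE (b b' : bool) (j k : nat) :
  (inr (b, j) == inr (b', k) :> Ity) = (b == b') && (j == k).
Proof. by apply/eqP/andP => [[-> ->]|[/eqP -> /eqP ->]]. Qed.

Lemma memJ k (i : Ity) : (i \in Jk k) =
  match i with inl b => ~~ b | inr (_, j) => (j < k)%N end.
Proof.
elim: k i => [|k IH] i.
  case: i => [[]|[b j]] //=.
rewrite /= !in_cons IH.
by case: i => [[]|[[] j]] //=; rewrite !inrE /= ltnS [in RHS]leq_eqVlt.
Qed.

Lemma uniqJ k : uniq (Jk k).
Proof.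
elim: k => [//|k IH] /=; rewrite IH !in_cons !memJ /= ltnn andbT.
by [].
Qed.

Lemma notinJ k : inl true \notin Jk k.
Proof. by rewrite memJ. Qed.

Section Decomp.
Context (R : realType) (Mm Q : 'M[R]_2).

Lemma chain_decomp k : exists w : Ity -> 'cV[R]_2, forall (Omega : Type) (rho0 phi0 : Omega -> R)
  (xi eta : nat -> Omega -> R) o,
  chain Mm Q rho0 phi0 xi eta k o =
  rho0 o *: (Mm ^+ k *m cv2 1 0) +
  \sum_(i <- Jk k) inputs rho0 phi0 xi eta i o *: w i.
Proof.
elim: k => [|k [w IH]].
  exists (fun _ => cv2 0 1) => Omega rho0 phi0 xi eta o /=.
  by rewrite big_cons big_nil addr0 expr0 mul1mx -cv2_dec.
exists (fun i => if i == inr (true, k) then Q *m cv2 1 0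
         else if i == inr (false, k) then Q *m cv2 0 1 else Mm *m w i) => Omega rho0 phi0 xi eta o /=.
rewrite IH big_cons big_cons /= !eqxx /=.
rewrite mulmxDr -scalemxAr mulmxA mulmxE -exprS mulmx_sumr.
rewrite (cv2_dec (xi k o)) mulmxDr -!scalemxAr.
rewrite -!addrA; congr (_ + _).
rewrite addrC -addrA; congr (_ + (_ + _)).
rewrite big_seq [RHS]big_seq; apply: eq_bigr => i iJ.
rewrite memJ in iJ.
case: i iJ => [b|[b j]] /= iJ; first by rewrite scalemxAr.
rewrite !inrE.
have jk : (j == k) = false by apply/negbTE; rewrite neq_ltn iJ.
by rewrite jk !andbF scalemxAr.
Qed.

End Decomp.

Lemma chain00 (R : realType) (Mm Q : 'M[R]_2) k : exists c : Ity -> R,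
  forall (Omega : Type) (rho0 phi0 : Omega -> R) (xi eta : nat -> Omega -> R) o,
  chain Mm Q rho0 phi0 xi eta k o 0 0 =
  (Mm ^+ k *m cv2 1 0) 0 0 * rho0 o + lsum c (inputs rho0 phi0 xi eta) (Jk k) o.
Proof.
have [w H] := chain_decomp Mm Q k.
exists (fun i => w i 0 0) => Omega rho0 phi0 xi eta o; rewrite H mxE summxE mxE /lsum.
congr (_ + _); first by rewrite mulrC.
by apply: eq_bigr => i _; rewrite mxE mulrC.
Qed.

Lemma bern (R : realFieldType) (u : R) n : 0 <= u <= 1 ->
  (1 - u) ^+ n * (1 + n%:R * u) <= 1.
Proof.
move=> /andP [u0 u1]; elim: n => [|n IH]; first by rewrite expr0 mul0r addr0 mulr1.
have p0 : 0 <= (1 - u) ^+ n by apply: exprn_ge0; lra.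
have x0 : 0 <= n%:R :> R by [].
rewrite exprSr -mulrA mulrS.
set p := (1 - u) ^+ n in IH p0 *; set x := n%:R in IH x0 *.
have h : 0 <= p * (x + 1) * u ^+ 2 by apply: mulr_ge0; [apply: mulr_ge0|apply: sqr_ge0]; lra.
rewrite expr2 in h.
nra.
Qed.

Definition Acoef (R : realType) (th w dt lm : R) :=
  cos th - dt ^+ 2 * lm / 2 * (sin th / (w * dt)).

Section Bound.
Context (R : realType).

Lemma a_bound (th w dt lm : R) (k : nat) :
  0 < th -> th <= 2 * atan (w * dt / 2) -> 0 <= lm -> 0 < dt -> dt ^+ 2 * lm < 4 ->
  0 < w -> (1 < k)%N ->
  `|(Mmat th w dt lm ^+ k *m cv2 1 0) 0 0| <=
  (if 0 < Acoef th w dt lm then Acoef th w dt lm ^+ k.-1 else 2^-1 * (k.-1)%:R^-1).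
Proof.
move=> th0 thle lm0 dt0 hst w0.
case: k => [//|k] hk; rewrite a_coef /=.
set A := Acoef th w dt lm.
set c := cos (th / 2); set s := sin (th / 2).
have pi0 : 0 < pi :> R := pi_gt0 R.
have th2a : th / 2 <= atan (w * dt / 2) by lra.
have th2b : th / 2 < pi / 2 by have := atan_ltpi2 (w * dt / 2); lra.
have c0 : 0 < c by apply: cos_gt0_pihalf; apply/andP; split; lra.
have s0 : 0 < s by apply: sin_gt0_pihalf; apply/andP; split; lra.
have cs1 : c ^+ 2 + s ^+ 2 = 1 by rewrite cos2Dsin2.
have tanb : s / c <= w * dt / 2.
  have [/andP [al ar] ta] := atan_def (w * dt / 2).
  rewrite leNgt; apply/negP => H.
  have : tan (atan (w * dt / 2)) < tan (th / 2) by rewrite ta /tan -/c -/s.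
  rewrite ltr_tan ?in_itv /= ?al ?ar //; first lra.
  by apply/andP; split; lra.
have sb : s <= w * dt / 2 * c by rewrite -ler_pdivrMr.
have vuE : vu th w dt lm = A.
  rewrite /vu /uv1 /uv2 /vv1 /vv2 /A -/c -/s.
  have thE : th = th / 2 + th / 2 by rewrite -splitr.
  rewrite /Acoef.
  have -> : cos th = c ^+ 2 - s ^+ 2 by rewrite {1}thE cosD -/c -/s; ring.
  have -> : sin th = 2 * s * c by rewrite {1}thE sinD -/c -/s; ring.
  by field; rewrite gt_eqF // gt_eqF.
have tE : uv1 th w dt lm * vv1 th w dt lm = (1 + A) / 2.
  rewrite -vuE /vu /uv1 /uv2 /vv1 /vv2 -/c -/s.
  apply/eqP; rewrite -subr_eq0; apply/eqP.
  transitivity ((c ^+ 2 + s ^+ 2 - 1) / 2); first by field; rewrite gt_eqF.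
  by rewrite cs1 subrr mul0r.
have t0 : 0 <= (1 + A) / 2.
  rewrite -tE /uv1 /vv1 -/c -/s; apply: mulr_ge0; first lra.
  rewrite subr_ge0 ler_pdivrMr //.
  have : dt * lm / 2 * s <= dt * lm / 2 * (w * dt / 2 * c).
    by apply: ler_wpM2l => //; apply: mulr_ge0; [apply: mulr_ge0|]; lra.
  move=> h; apply: (le_trans h).
  have -> : dt * lm / 2 * (w * dt / 2 * c) = (dt ^+ 2 * lm) / 4 * (c * w) by field.
  rewrite -[leRHS]mul1r; apply: ler_wpM2r; first by apply: mulr_ge0; lra.
  lra.
have t1 : (1 + A) / 2 <= 1.
  rewrite -tE /uv1 /vv1 -/c -/s.
  have hs : 0 <= dt * lm / 2 * s / w.
    by apply: divr_ge0; [apply: mulr_ge0; [apply: mulr_ge0; [apply: mulr_ge0|]|]|]; lra.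
  have : c * (c - dt * lm / 2 * s / w) <= c ^+ 2.
    by rewrite expr2; apply: ler_wpM2l; lra.
  have : c ^+ 2 <= 1 by have := sqr_ge0 s; lra.
  lra.
rewrite vuE tE normrM normrX.
case: ifPn => [Apos|]; rewrite -/A.
  rewrite (ger0_norm t0) (ger0_norm (ltW Apos)).
  rewrite -[leRHS]mulr1; apply: ler_wpM2l; last by [].
  by apply: exprn_ge0; apply: ltW.
rewrite -leNgt => Ale0.
rewrite (ger0_norm t0) (ler0_norm Ale0).
have v01 : 0 <= 1 + A <= 1 by apply/andP; split; lra.
have hb := bern k v01.
have kpos : 0 < k%:R :> R by rewrite ltr0n.
rewrite (_ : 1 - (1 + A) = - A) in hb; last by ring.
set u := - A in hb *.
have u0 : 0 <= u ^+ k by apply: exprn_ge0; rewrite /u; lra.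
rewrite -(ler_pM2r kpos).
have -> : 2^-1 / k%:R * k%:R = 2^-1 :> R by field; rewrite gt_eqF.
have : u ^+ k * ((1 + A) * k%:R) <= u ^+ k * (1 + k%:R * (1 + A)).
  by apply: ler_wpM2l => //; nra.
nra.
Qed.

End Bound.

Section W2B.
Context (R : realType).

Lemma W2sq_ge0 (mu nu : set R -> \bar R) : (0 <= W2sq mu nu)%E.
Proof.
apply: le_ereal_inf_tmp => _ [pi _ <-].
by apply: integral_ge0 => z _; rewrite lee_fin sqr_ge0.
Qed.

Lemma W2_bound (a coef : R) (mu nu L : probability R R) (l1 l2 : set R -> \bar R) :
  0 < coef -> `|a| <= coef ->
  (forall B, measurable B -> l1 B = (mu \x L)%E ((fun z : R * R => a * z.1 + z.2) @^-1` B)) ->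
  (forall B, measurable B -> l2 B = (nu \x L)%E ((fun z : R * R => a * z.1 + z.2) @^-1` B)) ->
  (W2 l1 l2 <= coef%:E * W2 mu nu)%E.
Proof.
move=> c0 ac hl1 hl2.
have a2 : a ^+ 2 <= coef ^+ 2.
  rewrite -real_normK ?num_real //; have := normr_ge0 a; nra.
have step : forall pi : probability (R * R)%type R, coupling mu nu pi ->
    (W2sq l1 l2 <= (coef ^+ 2)%:E * \int[pi]_z ((z.1 - z.2) ^+ 2)%:E)%E.
  move=> pi hpi.
  apply: (@le_trans _ _ ((a ^+ 2)%:E * \int[pi]_z ((z.1 - z.2) ^+ 2)%:E)%E).
    apply: ereal_inf_lbound; exists (pi' a L pi); last exact: pi'_cost.
    move=> A mA; split.
      by rewrite hl1 //; exact: (pi'_marg1 a L hpi mA).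
    by rewrite hl2 //; exact: (pi'_marg2 a L hpi mA).
  apply: lee_wpmul2r; first by apply: integral_ge0 => z _; rewrite lee_fin sqr_ge0.
  by rewrite lee_fin.
rewrite /W2.
case E1 : (W2sq mu nu) => [r| |].
- have r0 : 0 <= r by have := W2sq_ge0 mu nu; rewrite E1 lee_fin.
  case E2 : (W2sq l1 l2) => [y| |].
  + have y0 : 0 <= y by have := W2sq_ge0 l1 l2; rewrite E2 lee_fin.
    have hy : y / coef ^+ 2 <= r.
      rewrite -lee_fin -E1; apply: le_ereal_inf_tmp => _ [pi hpi <-].
      have := step pi hpi; rewrite E2.
      case: (\int[pi]_z ((z.1 - z.2) ^+ 2)%:E)%E => [x| |] //=.
      * rewrite -EFinM !lee_fin => h.
        by rewrite ler_pdivrMr ?exprn_gt0 // mulrC.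
      * by move=> _; rewrite leey.
      * by rewrite gt0_muleNy ?lte_fin ?exprn_gt0 // leeNy_eq.
    have hy' : y <= coef ^+ 2 * r.
      by move: hy; rewrite ler_pdivrMr ?exprn_gt0 // mulrC.
    have ce : coef * Num.sqrt r = Num.sqrt (coef ^+ 2 * r).
      by rewrite sqrtrM ?sqr_ge0 // sqrtr_sqr ger0_norm // ltW.
    rewrite -EFinM lee_fin ce.
    exact: ler_wsqrtr.
  + exfalso.
    suff : (+oo <= W2sq mu nu)%E by rewrite E1 leye_eq.
    apply: le_ereal_inf_tmp => _ [pi hpi <-].
    have := step pi hpi; rewrite E2.
    case: (\int[pi]_z ((z.1 - z.2) ^+ 2)%:E)%E => [x| |] //=.
    by rewrite gt0_muleNy ?lte_fin ?exprn_gt0.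
  + by rewrite leNye.
- by rewrite gt0_muley ?lte_fin // leey.
- by have := W2sq_ge0 mu nu; rewrite E1.
Qed.

End W2B.

Unset Implicit Arguments. Set Strict Implicit.

Theorem theorem3 (R : realType) (theta : R -> R)
  (htheta : forall x : R, 0 < x -> 0 < theta x <= 2 * atan (x / 2))
  (Lambda m dt : R) (n : nat) (beta omega : R)
  (hLambda : 0 <= Lambda) (hm : 0 < m) (hdt : 0 < dt)
  (hstab : dt ^+ 2 * Lambda / m < 4) (hn : (1 <= n)%N)
  (hbeta : 0 < beta) (homega : 0 < omega)
  (Q : 'M[R]_2)
  (hQ : psd_sqrt Q (Rmat (theta (omega * dt)) omega dt (Lambda / m) beta (m / n%:R)))
  (k : nat) (hk : (1 < k)%N)
  (mu nu : probability R R)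
  (d1 : measure_display) (Omega1 : measurableType d1) (P1 : probability Omega1 R)
  (rho1 phi1 : Omega1 -> R) (xi1 eta1 : nat -> Omega1 -> R)
  (h1 : chain_setup P1 mu (Num.sqrt (beta * (m / n%:R))^-1) rho1 phi1 xi1 eta1)
  (d2 : measure_display) (Omega2 : measurableType d2) (P2 : probability Omega2 R)
  (rho2 phi2 : Omega2 -> R) (xi2 eta2 : nat -> Omega2 -> R)
  (h2 : chain_setup P2 nu (Num.sqrt (beta * (m / n%:R))^-1) rho2 phi2 xi2 eta2) :
  let vth := theta (omega * dt) in
  let A := cos vth - dt ^+ 2 * (Lambda / m) / 2 * (sin vth / (omega * dt)) in
  let Mm := Mmat vth omega dt (Lambda / m) in
  (W2 (law_rho Mm Q P1 rho1 phi1 xi1 eta1 k) (law_rho Mm Q P2 rho2 phi2 xi2 eta2 k)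
   <= (if 0 < A then A ^+ k.-1 else 2^-1 * (k.-1)%:R^-1)%:E * W2 mu nu)%E.
Proof.
cbv zeta.
set vth := theta (omega * dt).
set Mm := Mmat vth omega dt (Lambda / m).
case: h1 => [[mr1 hr1] [mp1 hp1] hx1 he1 ind1].
case: h2 => [[mr2 hr2] [mp2 hp2] hx2 he2 ind2].
set X1 := inputs rho1 phi1 xi1 eta1.
set X2 := inputs rho2 phi2 xi2 eta2.
have mX1 : forall i, measurable_fun setT (X1 i).
  by case => [[]|[[] j]] /=; [exact: mr1|exact: mp1|exact: (hx1 j).1|exact: (he1 j).1].
have mX2 : forall i, measurable_fun setT (X2 i).
  by case => [[]|[[] j]] /=; [exact: mr2|exact: mp2|exact: (hx2 j).1|exact: (he2 j).1].
have [c Hc] := chain00 Mm Q k.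
set a := (Mm ^+ k *m cv2 1 0) 0 0.
have mS1 := lsum_meas c (Jk k) mX1.
have mS2 := lsum_meas c (Jk k) mX2.
set L := distribution P1 (mkmf mS1).
have mg := meas_lin a.
have mgB : forall B, measurable B -> measurable ((fun z : R * R => a * z.1 + z.2) @^-1` B).
  by move=> B mB; rewrite -[X in measurable X]setTI; apply: mg.
have law1 : forall B, measurable B -> law_rho Mm Q P1 rho1 phi1 xi1 eta1 k B =
    (mu \x L)%E ((fun z : R * R => a * z.1 + z.2) @^-1` B).
  move=> B mB; rewrite /law_rho /pushforward.
  have -> : (fun o => chain Mm Q rho1 phi1 xi1 eta1 k o 0 0) @^-1` B =
      (fun o => (X1 (inl true) o, lsum c X1 (Jk k) o)) @^-1`
      ((fun z : R * R => a * z.1 + z.2) @^-1` B).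
    by apply/seteqP; split => o /=; rewrite Hc.
  rewrite (joint_law (mX1 (inl true)) mS1); last 2 first.
  - move=> A0 B0 mA0 mB0; apply: indep_sum => //; [exact: uniqJ|exact: notinJ].
  - exact: mgB.
  apply: prod_eqm => //; last exact: mgB.
have law2 : forall B, measurable B -> law_rho Mm Q P2 rho2 phi2 xi2 eta2 k B =
    (nu \x L)%E ((fun z : R * R => a * z.1 + z.2) @^-1` B).
  move=> B mB; rewrite /law_rho /pushforward.
  have -> : (fun o => chain Mm Q rho2 phi2 xi2 eta2 k o 0 0) @^-1` B =
      (fun o => (X2 (inl true) o, lsum c X2 (Jk k) o)) @^-1`
      ((fun z : R * R => a * z.1 + z.2) @^-1` B).
    by apply/seteqP; split => o /=; rewrite Hc.
  rewrite (joint_law (mX2 (inl true)) mS2); last 2 first.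
  - move=> A0 B0 mA0 mB0; apply: indep_sum => //; [exact: uniqJ|exact: notinJ].
  - exact: mgB.
  apply: prod_eqm => //; last exact: mgB.
  - move=> A0 mA0; rewrite /L /distribution /pushforward /=.
    symmetry; apply: (law_sum_eq mX1 mX2 ind1 ind2 c (uniqJ k)) => // j jJ A1 mA1.
    case: j jJ => [[]|[[] j]] jJ.
    + by rewrite memJ in jJ.
    + by rewrite /X1 /X2 /= hp1 // hp2.
    + by rewrite /X1 /X2 /= (hx1 j).2 // (hx2 j).2.
    + by rewrite /X1 /X2 /= (he1 j).2 // (he2 j).2.
have th0 := htheta (omega * dt) (mulr_gt0 homega hdt).
case/andP: th0 => th0 thle.
have lm0 : 0 <= Lambda / m by apply: divr_ge0 => //; exact: ltW.
have hst : dt ^+ 2 * (Lambda / m) < 4 by rewrite mulrA.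
have hab := a_bound th0 thle lm0 hdt hst homega hk.
apply: (W2_bound _ _ law1 law2).
- case: ifPn => [Apos|_]; first exact: exprn_gt0.
  apply: mulr_gt0; first by [].
  by rewrite invr_gt0 ltr0n; move: hk; case: (k) => [|[|k0]].
- exact: hab.
Qed.
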